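(* Let $\mathbb{K}$ be a field, $n>1$, $a=\sum_{j=0}^d c_j s^j\in\mathbb{K}[s]^n$ a non-zero row vector of degree $d$, and $A\in\mathbb{K}^{(2d+1)\times n(d+1)}$ the matrix whose $(i,\,kn+r)$ entry ($1\le i\le 2d+1$, $0\le k\le d$, $1\le r\le n$) is the $r$-th entry of $c_{i-1-k}$ (zero if $i-1-k\notin\{0,\dots,d\}$). With $\tilde q$ and $b_r$ as in the context, $\mathrm{syz}(a)=\langle b_r^\flat\mid r\in\tilde q\rangle_{\mathbb{K}[s]}$.
   Context: A column of a matrix is pivotal if it is either the first column and non-zero, or linearly independent of all previous columns; otherwise non-pivotal. $p$ is the set of pivotal indices of $A$, $q$ the set of non-pivotal indices, and $\tilde q=\{\min\varrho\mid\varrho\in q/(n)\}$ the set of basic non-pivotal indices (minimal elements of the classes of $q$ modulo $n$). For $i\in q$ write uniquely $A_{*i}=\sum_{\{j\in p\mid j<i\}}\alpha^{(i)}_jA_{*j}$ ($A_{*j}$ the $j$-th column) and set $b_i=e_i-\sum_{\{j\in p\mid j<i\}}\alpha^{(i)}_je_j\in\mathbb{K}^{n(d+1)}$, $e_i$ the standard basis vectors. For $v\in\mathbb{K}^{n(d+1)}$ in blocks $v=[w_0;\dots;w_d]$ with $w_i\in\mathbb{K}^n$, $v^\flat=\sum_{i=0}^d s^i w_i\in\mathbb{K}[s]^n$. $\mathrm{syz}(a)=\{h\in\mathbb{K}[s]^n\mid a\,h=0\}$. *)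

(* Defs.v *)
From HB Require Import structures.
From mathcomp Require Import all_boot all_order all_algebra.
Set Implicit Arguments. Unset Strict Implicit. Unset Printing Implicit Defensive.
Import Order.TTheory GRing.Theory Num.Theory.
Local Open Scope ring_scope.

(* Indices are 0-based: row i in [0,2d], column j = k*n + r, k in [0,d], r in [0,n-1].
   Entry (i, k*n+r) is the coefficient of s^(i-k) in a_r (0 if k > i; coefficients
   beyond the degree d are 0 automatically). *)
Definition coefmx (K : fieldType) (n d : nat) (a : 'rV[{poly K}]_n)
  : 'M[K]_((2 * d).+1, n * d.+1) :=
  \matrix_(i, j) (if (j %/ n <= i)%N
                  then \sum_(r < n | val r == (j %% n)%N) (a 0 r)`_(i - j %/ n)
                  else 0).

Definition prev_span (K : fieldType) (m N : nat) (A : 'M[K]_(m, N)) (j : 'I_N)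
  : 'M[K]_m :=
  (\sum_(k < N | (k < j)%N) <<(col k A)^T>>)%MS.

Definition pivotal (K : fieldType) (m N : nat) (A : 'M[K]_(m, N)) (j : 'I_N) : bool :=
  ~~ ((col j A)^T <= prev_span A j)%MS.

Definition basic_nonpivotal (K : fieldType) (n m N : nat) (A : 'M[K]_(m, N))
  (j : 'I_N) : bool :=
  ~~ pivotal A j &&
  [forall k : 'I_N, (~~ pivotal A k && (k %% n == j %% n)%N) ==> (j <= k)%N].

Definition evec (K : fieldType) (N : nat) (i : 'I_N) : 'cV[K]_N := delta_mx i 0.

Definition bvec (K : fieldType) (m N : nat) (A : 'M[K]_(m, N))
  (alpha : 'I_N -> 'I_N -> K) (i : 'I_N) : 'cV[K]_N :=
  @evec K N i - \sum_(j < N | pivotal A j && (j < i)%N) alpha i j *: @evec K N j.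

(* v^flat = sum_k s^k w_k, where w_k is the k-th block of length n *)
Definition flat (K : fieldType) (n N : nat) (v : 'cV[K]_N) : 'cV[{poly K}]_n :=
  \col_(r < n) \sum_(j < N | (j %% n == r)%N) (v j 0)%:P * 'X^(j %/ n).

(* Main.v *)
Require Import Defs.
From HB Require Import structures.
From mathcomp Require Import all_boot all_order all_algebra zify.
Import Order.TTheory GRing.Theory Num.Theory.
Set Implicit Arguments. Unset Strict Implicit. Unset Printing Implicit Defensive.
Local Open Scope ring_scope.

Lemma ar (n k r j: nat) : (0 < n)%N -> (r < n)%N -> ((j %% n == r) && (j %/ n == k))%N = (j == k * n + r)%N.
Proof. move=> n0 rn. apply/andP/eqP. move=> [/eqP H1 /eqP H2]. by rewrite (divn_eq j n) H1 H2.
move=> ->. by rewrite modnMDl divnMDl // modn_small // divn_small // addn0 !eqxx. Qed.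

Lemma flat_coef (K : fieldType) (n N : nat) (v : 'cV[K]_N) (r : 'I_n) k :
  (flat n v r 0)`_k = \sum_(j < N | (j %% n == r)%N && (j %/ n == k)%N) v j 0.
Proof.
rewrite mxE coef_sum big_mkcondr /=; apply: eq_bigr => j _.
by rewrite coefCM coefXn eq_sym; case: eqP => _; rewrite ?mulr1 ?mulr0.
Qed.

Lemma flatD (K : fieldType) (n N : nat) (v w : 'cV[K]_N) :
  flat n (v + w) = flat n v + flat n w.
Proof.
apply/matrixP => i j; rewrite !mxE -big_split /=; apply: eq_bigr => k _.
by rewrite !mxE polyCD mulrDl.
Qed.

Lemma flatZ (K : fieldType) (n N : nat) c (v : 'cV[K]_N) :
  flat n (c *: v) = c%:P *: flat n v.
Proof.
apply/matrixP => i j; rewrite !mxE mulr_sumr; apply: eq_bigr => k _.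
by rewrite !mxE polyCM mulrA.
Qed.

Lemma flatN (K : fieldType) (n N : nat) (v : 'cV[K]_N) :
  flat n (- v) = - flat n v.
Proof. by rewrite -scaleN1r flatZ polyCN scaleN1r. Qed.

Definition cvec (K : fieldType) (n N : nat) (h : 'cV[{poly K}]_n) : 'cV[K]_N :=
  \col_(j < N) \sum_(r < n | val r == (j %% n)%N) (h r 0)`_(j %/ n).

Lemma ord_lt_div (n d : nat) (j : 'I_(n * d.+1)) : (0 < n)%N -> (j %/ n <= d)%N.
Proof. move=> n0; rewrite -ltnS ltn_divLR //; case: j => j /=; by rewrite mulnC. Qed.

Lemma idx_lt (n d k r : nat) : (r < n)%N -> (k <= d)%N -> (k * n + r < n * d.+1)%N.
Proof.
move=> rn kd; apply: (@leq_trans (k * n + n)); first by rewrite ltn_add2l.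
by rewrite -mulSnr mulnC leq_mul2l ltnS kd orbT.
Qed.

Lemma cvec_idx (K : fieldType) (n d : nat) (h : 'cV[{poly K}]_n) (r : 'I_n) k
  (H : (k * n + r < n * d.+1)%N) :
  cvec (n * d.+1) h (Ordinal H) 0 = (h r 0)`_k.
Proof.
have n0 : (0 < n)%N by apply: leq_ltn_trans (ltn_ord r).
rewrite mxE /= modnMDl divnMDl // modn_small // divn_small // addn0.
by rewrite (big_pred1 r) // => r'; rewrite /= -val_eqE.
Qed.

Lemma flat_cvec (K : fieldType) (n d : nat) (h : 'cV[{poly K}]_n) :
  (0 < n)%N -> (forall r k, (d < k)%N -> (h r 0)`_k = 0) ->
  flat n (cvec (n * d.+1) h) = h.
Proof.
move=> n0 hd; apply/matrixP => r j; rewrite ord1; apply/polyP => k; rewrite flat_coef.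
case: (leqP k d) => hk.
  have H := idx_lt (ltn_ord r) hk.
  rewrite (eq_bigl (pred1 (Ordinal H))); first by rewrite big_pred1_eq cvec_idx.
  by move=> j' /=; rewrite ar // -val_eqE.
rewrite hd // big1 // => j' /andP [_ /eqP e].
by move: (ord_lt_div j' n0); rewrite e leqNgt hk.
Qed.

Lemma syz_coef (K : fieldType) (n N : nat) (a : 'rV[{poly K}]_n) (v : 'cV[K]_N) i :
  ((a *m flat n v) 0 0)`_i = \sum_(j < N) v j 0 *
     (if (j %/ n <= i)%N then \sum_(r < n | val r == (j %% n)%N) (a 0 r)`_(i - j %/ n) else 0).
Proof.
rewrite mxE coef_sum.
transitivity (\sum_(r < n) \sum_(j < N | (j %% n == r)%N)
   v j 0 * (if (j %/ n <= i)%N then (a 0 r)`_(i - j %/ n) else 0)).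
  apply: eq_bigr => r _; rewrite mxE mulr_sumr coef_sum; apply: eq_bigr => j _.
  by rewrite mulrCA coefCM coefMXn; case: leqP.
rewrite (exchange_big_dep xpredT) //=. apply: eq_bigr => j _.
case: (j %/ n <= i)%N; last by rewrite mulr0 big1 // => r _; rewrite mulr0.
by rewrite mulr_sumr; apply: eq_bigl => r; rewrite eq_sym.
Qed.

Lemma mulmx_coef (K : fieldType) (n d : nat) (a : 'rV[{poly K}]_n) (v : 'cV[K]_(n * d.+1)) i :
  (coefmx d a *m v) i 0 = ((a *m flat n v) 0 0)`_i.
Proof.
rewrite syz_coef mxE; apply: eq_bigr => j _; rewrite mxE mulrC //.
Qed.

Lemma syz_iff (K : fieldType) (n d : nat) (a : 'rV[{poly K}]_n) (v : 'cV[K]_(n * d.+1)) :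
  (0 < n)%N -> (forall r m, (d < m)%N -> (a 0 r)`_m = 0) ->
  a *m flat n v = 0 <-> coefmx d a *m v = 0.
Proof.
move=> n0 Hsz; split => H.
  by apply/matrixP => i j; rewrite ord1 mulmx_coef H !mxE coef0.
apply/matrixP => i j; rewrite !ord1 [RHS]mxE; apply/polyP => k; rewrite coef0.
case: (ltnP k (2 * d).+1) => hk.
  by rewrite -(mulmx_coef _ _ (Ordinal hk)) H mxE.
rewrite syz_coef big1 // => j0 _; case: ifP => _; last by rewrite mulr0.
rewrite big1 ?mulr0 // => r _; apply: Hsz.
have := ord_lt_div j0 n0; move: hk; set t := (j0 %/ n)%N; lia.
Qed.

Lemma nonpiv_of (K : fieldType) (m N : nat) (A : 'M[K]_(m, N)) (v : 'cV[K]_N) (L : 'I_N) :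
  A *m v = 0 -> v L 0 != 0 -> (forall j : 'I_N, (L < j)%N -> v j 0 = 0) -> ~~ pivotal A L.
Proof.
move=> Av vL vz; rewrite /pivotal negbK.
have E : \sum_j v j 0 *: col j A = 0.
  apply/matrixP => i k; rewrite ord1 summxE; transitivity ((A *m v) i 0); last by rewrite Av.
  rewrite !mxE; apply: eq_bigr => j _.
  by rewrite !mxE mulrC.
have E2 : col L A = \sum_(j < N | (j < L)%N) (- (v L 0)^-1 * v j 0) *: col j A.
  have : v L 0 *: col L A + \sum_(j < N | (j < L)%N) v j 0 *: col j A = 0.
    rewrite -[RHS]E [RHS](bigD1 L) //=; congr (_ + _).
    rewrite [RHS]big_mkcond [LHS]big_mkcond; apply: eq_bigr => j _.
    case: (ltngtP j L) => hj; rewrite ?hj //.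
      by rewrite -(inj_eq val_inj) /= (ltn_eqF hj).
    by rewrite vz // scale0r; case: eqP.
    have -> : j = L by apply: val_inj.
    by rewrite eqxx.
  move/eqP; rewrite addr_eq0 => /eqP H.
  have -> : col L A = (v L 0)^-1 *: (v L 0 *: col L A) by rewrite scalerA mulVf // scale1r.
  rewrite H scalerN -scaleNr scaler_sumr; apply: eq_bigr => j _; by rewrite scalerA.
rewrite E2 linear_sum /=; apply: summx_sub => j hj.
rewrite linearZ /=; apply: scalemx_sub.
by apply: (sumsmx_sup j) => //; rewrite genmxE.
Qed.

Definition inspan (K : fieldType) (n m N : nat) (A : 'M[K]_(m, N))
  (alpha : 'I_N -> 'I_N -> K) (h : 'cV[{poly K}]_n) : Prop :=
  exists p : 'I_N -> {poly K},
    h = \sum_(r < N | basic_nonpivotal n A r) p r *: flat n (bvec A alpha r).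
Arguments inspan {K} n {m N} A alpha h.

Lemma span0 (K : fieldType) (n m N : nat) (A : 'M[K]_(m, N)) alpha :
  inspan n A alpha 0.
Proof. by exists (fun _ => 0); rewrite big1 // => r _; rewrite scale0r. Qed.

Lemma spanD (K : fieldType) (n m N : nat) (A : 'M[K]_(m, N)) alpha h1 h2 :
  inspan n A alpha h1 -> inspan n A alpha h2 -> inspan n A alpha (h1 + h2).
Proof.
move=> [p1 ->] [p2 ->]; exists (fun r => p1 r + p2 r).
by rewrite -big_split; apply: eq_bigr => r _; rewrite scalerDl.
Qed.

Lemma spanZ (K : fieldType) (n m N : nat) (A : 'M[K]_(m, N)) alpha c h :
  inspan n A alpha h -> inspan n A alpha (c *: h).
Proof.
move=> [p ->]; exists (fun r => c * p r).
by rewrite scaler_sumr; apply: eq_bigr => r _; rewrite scalerA.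
Qed.

Lemma spanN (K : fieldType) (n m N : nat) (A : 'M[K]_(m, N)) alpha h :
  inspan n A alpha h -> inspan n A alpha (- h).
Proof. by move=> H; rewrite -scaleN1r; apply: spanZ. Qed.

Lemma span_sum (K : fieldType) (n m N : nat) (A : 'M[K]_(m, N)) alpha (I : finType)
  (P : pred I) (F : I -> 'cV[{poly K}]_n) :
  (forall i, P i -> inspan n A alpha (F i)) -> inspan n A alpha (\sum_(i | P i) F i).
Proof.
move=> H; apply: (big_ind (inspan n A alpha)) => //; first exact: span0.
exact: spanD.
Qed.

Lemma span_b (K : fieldType) (n m N : nat) (A : 'M[K]_(m, N)) alpha c r :
  basic_nonpivotal n A r -> inspan n A alpha (c *: flat n (bvec A alpha r)).
Proof.
move=> br; exists (fun r' => if r' == r then c else 0).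
rewrite (bigD1 r) //= eqxx big1 ?addr0 // => r' /andP [_ /negbTE ->].
by rewrite scale0r.
Qed.

Lemma bvec_coef (K : fieldType) (m N : nat) (A : 'M[K]_(m, N)) alpha (r j : 'I_N) :
  (r <= j)%N -> bvec A alpha r j 0 = (j == r)%:R.
Proof.
move=> rj; rewrite !mxE summxE big1 ?subr0; first by rewrite andbT.
move=> i /andP [_ ir]; rewrite !mxE andbT.
have -> : (j == i) = false by apply/negbTE; rewrite -(inj_eq val_inj) /= neq_ltn (leq_trans ir rj) orbT.
by rewrite mulr0.
Qed.

Lemma bvec_ker (K : fieldType) (m N : nat) (A : 'M[K]_(m, N)) alpha (r : 'I_N) :
  col r A = \sum_(j < N | pivotal A j && (j < r)%N) alpha r j *: col j A ->
  A *m bvec A alpha r = 0.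
Proof.
move=> H; rewrite mulmxBr mulmx_sumr /evec -colE H; apply/eqP; rewrite subr_eq0; apply/eqP.
by apply: eq_bigr => j _; rewrite -scalemxAr -colE.
Qed.

Lemma cvec_coef (K : fieldType) (n N : nat) (h : 'cV[{poly K}]_n) (j : 'I_N) (n0 : (0 < n)%N) :
  cvec N h j 0 = (h (Ordinal (ltn_pmod j n0)) 0)`_(j %/ n).
Proof. by rewrite mxE (big_pred1 (Ordinal (ltn_pmod j n0))) // => r; rewrite /= -val_eqE. Qed.

Lemma flat_coef2 (K : fieldType) (n N : nat) (v : 'cV[K]_N) (r : 'I_n) k
  (H : (k * n + r < N)%N) : (flat n v r 0)`_k = v (Ordinal H) 0.
Proof.
have n0 : (0 < n)%N by apply: leq_ltn_trans (ltn_ord r).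
rewrite flat_coef (eq_bigl (pred1 (Ordinal H))) ?big_pred1_eq //.
by move=> j' /=; rewrite ar // -val_eqE.
Qed.

Lemma flat_coef_out (K : fieldType) (n N : nat) (v : 'cV[K]_N) (r : 'I_n) k :
  (N <= k * n + r)%N -> (flat n v r 0)`_k = 0.
Proof.
have n0 : (0 < n)%N by apply: leq_ltn_trans (ltn_ord r).
move=> H; rewrite flat_coef big1 // => j /andP [/eqP e1 /eqP e2].
have := ltn_ord j; rewrite (divn_eq j n) e1 e2 => H2.
by move: (leq_trans H2 H); rewrite ltnn.
Qed.

Lemma bflat_zero (K : fieldType) (n m N : nat) (A : 'M[K]_(m, N)) alpha (r : 'I_N) (ρ : 'I_n) k e :
  (r + e * n < k * n + ρ)%N -> ('X^e * flat n (bvec A alpha r) ρ 0)`_k = 0.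
Proof.
move=> H; rewrite coefXnM; case: ltnP => // ek.
case: (ltnP ((k - e) * n + ρ) N) => H2; last by rewrite flat_coef_out.
have le : (e * n <= k * n)%N by rewrite leq_mul2r ek orbT.
have E : ((k - e) * n = k * n - e * n)%N by rewrite mulnBl.
rewrite flat_coef2 bvec_coef /=.
  rewrite -val_eqE /= E; case: eqP => // E2; exfalso; move: H E2 le.
  set x := (k * n)%N; set y := (e * n)%N; lia.
rewrite E; move: H le; set x := (k * n)%N; set y := (e * n)%N; lia.
Qed.

Lemma flat0 (K : fieldType) (n N : nat) : flat n (0 : 'cV[K]_N) = 0.
Proof. by rewrite -(scale0r (0 : 'cV[K]_N)) flatZ scale0r. Qed.

Lemma reduce (K : fieldType) (n d : nat) (a : 'rV[{poly K}]_n)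
  (alpha : 'I_(n * d.+1) -> 'I_(n * d.+1) -> K) :
  (0 < n)%N -> (forall r m, (d < m)%N -> (a 0 r)`_m = 0) ->
  (forall i : 'I_(n * d.+1), ~~ pivotal (coefmx d a) i ->
     col i (coefmx d a) =
     \sum_(j < n * d.+1 | pivotal (coefmx d a) j && (j < i)%N)
        alpha i j *: col j (coefmx d a)) ->
  forall v : 'cV[K]_(n * d.+1), coefmx d a *m v = 0 ->
    inspan n (coefmx d a) alpha (flat n v).
Proof.
move=> n0 Hsz Hal.
set N := (n * d.+1)%N; set A := coefmx d a.
suff S : forall B (v : 'cV[K]_N), (forall j : 'I_N, (B <= j)%N -> v j 0 = 0) ->
   A *m v = 0 -> inspan n A alpha (flat n v).
  move=> v Av; apply: (S N) => // j; by rewrite leqNgt ltn_ord.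
elim=> [|B IH] v vz Av.
  have -> : v = 0 by apply/matrixP => i j; rewrite ord1 vz // mxE.
  by rewrite flat0; apply: span0.
case: (ltnP B N) => hB; last first.
  by apply: IH => // j hj; exfalso; move: (ltn_ord j); rewrite ltnNge (leq_trans hB hj).
set L := Ordinal hB.
case: (eqVneq (v L 0) 0) => vL.
  apply: IH => // j; rewrite leq_eqVlt => /orP [/eqP e|]; last exact: vz.
  by have -> : j = L by apply: val_inj.
have npL : ~~ pivotal A L.
  by apply: (nonpiv_of Av vL) => j hj; apply: vz.
pose P := fun j : 'I_N => ~~ pivotal A j && (j %% n == L %% n)%N.
have PL : P L by rewrite /P npL eqxx.
case: (arg_minnP (fun j : 'I_N => val j) PL) => r /andP [npr rmod] rmin.
have br : basic_nonpivotal n A r.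
  rewrite /basic_nonpivotal npr /=; apply/forallP => k; apply/implyP => /andP [h1 h2].
  by apply: rmin; rewrite /P h1 (eqP h2) rmod.
have rL : (r <= L)%N by apply: rmin.
pose e := (L %/ n - r %/ n)%N.
have Le : (L = r + e * n :> nat)%N.
  have dv : (r %/ n <= L %/ n)%N by apply: leq_div2r.
  have h3 : (r %/ n * n <= L %/ n * n)%N by rewrite leq_mul2r dv orbT.
  have h1 := divn_eq L n; have h2 := divn_eq r n; move: rmod => /eqP rmod.
  rewrite /e mulnBl; move: h1 h2 h3 rmod.
  set x := (r %/ n * n)%N; set y := (L %/ n * n)%N; set u := (r %% n)%N; set z := (L %% n)%N.
  lia.
set fb := flat n (bvec A alpha r).
pose w : 'cV[K]_N := cvec N ('X^e *: fb).
have fw : flat n w = 'X^e *: fb.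
  apply: flat_cvec => // ρ k hk; rewrite mxE bflat_zero //.
  rewrite -Le; apply: (leq_trans (ltn_ord L)); rewrite /N mulnC.
  by apply: (leq_trans _ (leq_addr _ _)); rewrite leq_mul2r hk orbT.
have w1 : w L 0 = 1.
  rewrite cvec_coef mxE coefXnM.
  have eL : (e <= L %/ n)%N by rewrite /e leq_subr.
  rewrite ltnNge eL /=.
  have eq : ((L %/ n - e) * n + L %% n = r)%N.
    have dv : (r %/ n <= L %/ n)%N by apply: leq_div2r.
    by rewrite /e subKn // -(eqP rmod) -divn_eq.
  have Hr : ((L %/ n - e) * n + Ordinal (ltn_pmod L n0) < N)%N by rewrite /= eq.
  rewrite (flat_coef2 _ Hr).
  have -> : Ordinal Hr = r by apply: val_inj; rewrite /= eq.
  by rewrite bvec_coef // eqxx.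
have wz : forall j : 'I_N, (L < j)%N -> w j 0 = 0.
  move=> j hj; rewrite cvec_coef mxE bflat_zero //= -Le.
  by rewrite -divn_eq.
have fbz : a *m fb = 0.
  by apply/syz_iff => //; apply: bvec_ker; apply: Hal; case/andP: br.
have Aw : A *m w = 0.
  by apply/syz_iff => //; rewrite fw -scalemxAr fbz scaler0.
clearbody w.
pose v' := v - v L 0 *: w.
have IHv : inspan n A alpha (flat n v').
  apply: IH; last by rewrite mulmxBr -scalemxAr Aw scaler0 Av subr0.
  move=> j; rewrite leq_eqVlt => /orP [/eqP ej|hj].
    have -> : j = L by apply: val_inj.
    by rewrite !mxE w1 mulr1 subrr.
  by rewrite !mxE (vz j hj) (wz j hj) mulr0 subr0.
have -> : flat n v = flat n v' + (v L 0)%:P *: flat n w.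
  by rewrite /v' flatD flatN flatZ subrK.
apply: spanD => //; rewrite fw scalerA; exact: span_b.
Qed.

Lemma low (K : fieldType) (n d : nat) (a : 'rV[{poly K}]_n)
  (alpha : 'I_(n * d.+1) -> 'I_(n * d.+1) -> K) :
  (0 < n)%N -> (forall r m, (d < m)%N -> (a 0 r)`_m = 0) ->
  (forall i : 'I_(n * d.+1), ~~ pivotal (coefmx d a) i ->
     col i (coefmx d a) =
     \sum_(j < n * d.+1 | pivotal (coefmx d a) j && (j < i)%N)
        alpha i j *: col j (coefmx d a)) ->
  forall g : 'cV[{poly K}]_n, a *m g = 0 -> (forall r k, (d < k)%N -> (g r 0)`_k = 0) ->
    inspan n (coefmx d a) alpha g.
Proof.
move=> n0 Hsz Hal g ag gd; rewrite -(flat_cvec n0 gd); apply: reduce => //.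
by apply/syz_iff => //; rewrite flat_cvec.
Qed.

Unset Implicit Arguments.
Set Strict Implicit.

Theorem lemma9 (K : fieldType) (n d : nat) (a : 'rV[{poly K}]_n)
  (alpha : 'I_(n * d.+1) -> 'I_(n * d.+1) -> K) :
  (1 < n)%N -> a != 0 -> \max_(r < n) size (a 0%R r) = d.+1 :> nat ->
  (forall i : 'I_(n * d.+1), ~~ pivotal (coefmx d a) i ->
     col i (coefmx d a) =
     \sum_(j < n * d.+1 | pivotal (coefmx d a) j && (j < i)%N)
        alpha i j *: col j (coefmx d a)) ->
  forall h : 'cV[{poly K}]_n,
    a *m h = 0 <->
    exists p : 'I_(n * d.+1) -> {poly K},
      h = \sum_(r < n * d.+1 | basic_nonpivotal n (coefmx d a) r)
            p r *: flat n (bvec (coefmx d a) alpha r).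
Proof.
move=> n1 a0 hmax Hal h.
have n0 : (0 < n)%N by apply: ltnW.
have Hsz : forall r m, (d < m)%N -> (a 0 r)`_m = 0.
  move=> r m dm; apply: nth_default; apply: leq_trans dm.
  by rewrite -hmax (leq_bigmax r).
split; last first.
  move=> [p ->]; rewrite mulmx_sumr big1 // => r /andP [npr _].
  rewrite -scalemxAr.
  have -> : a *m flat n (bvec (coefmx d a) alpha r) = 0.
    by apply/syz_iff => //; apply: bvec_ker; apply: Hal.
  by rewrite scaler0.
move=> ah.
have [ρ hρ] := bigop.eq_bigmax (fun r : 'I_n => size (a 0 r)) (ltac:(by rewrite card_ord)).
have sρ : size (a 0 ρ) = d.+1 by rewrite -hρ.
set aρ := a 0 ρ.
have aρ0 : aρ != 0 by rewrite -size_poly_eq0 sρ.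
pose κ := fun i : 'I_n => aρ *: (delta_mx i 0 : 'cV[{poly K}]_n) - a 0 i *: delta_mx ρ 0.
have κE : forall i k, κ i k 0 = aρ * (k == i)%:R - a 0 i * (k == ρ)%:R.
  by move=> i k; rewrite !mxE !andbT.
have aκ : forall i, a *m κ i = 0.
  move=> i; rewrite mulmxBr -!scalemxAr -!colE.
  by apply/matrixP => x y; rewrite !ord1 !mxE mulrC subrr.
have κs : forall i, inspan n (coefmx d a) alpha (κ i).
  move=> i; apply: low => // r k dk; rewrite κE coefB.
  by case: eqP => _; case: eqP => _; rewrite ?mulr1 ?mulr0 ?coef0 ?Hsz ?subr0.
pose h' := h - \sum_(i | i != ρ) (h i 0 %/ aρ) *: κ i.
have ah' : a *m h' = 0.
  rewrite mulmxBr ah mulmx_sumr big1 ?subr0 // => i _.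
  by rewrite -scalemxAr aκ scaler0.
have h'k : forall k, k != ρ -> h' k 0 = h k 0 %% aρ.
  move=> k kρ; rewrite 2!mxE summxE (bigD1 k) //= big1.
    rewrite addr0 mxE κE eqxx (negbTE kρ) mulr1 mulr0 subr0.
    by rewrite {1}(divp_eq (h k 0) aρ) mulrC addrC addKr.
  move=> i /andP [_ ik]; rewrite mxE κE.
  have ki : (k == i) = false by rewrite eq_sym (negbTE ik).
  by rewrite ki (negbTE kρ) !mulr0 subr0 mulr0.
have sk : forall k, k != ρ -> (size (h' k 0%R) <= d)%N.
  move=> k kρ; rewrite h'k // -ltnS -sρ ltn_modp //.
have sρ' : (size (h' ρ 0%R) <= d)%N.
  have E : aρ * h' ρ 0 = - \sum_(k | k != ρ) a 0 k * h' k 0.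
    apply/eqP; rewrite -addr_eq0 -(bigD1 ρ (P := xpredT) (F := fun k => a 0 k * h' k 0)) //.
    by have := congr1 (fun M : 'M_1 => M 0 0) ah'; rewrite !mxE => ->.
  have : (size (aρ * h' ρ 0)%R <= 2 * d)%N.
    rewrite E size_polyN; apply: (big_ind (fun p : {poly K} => size p <= 2 * d)%N) => //.
      by rewrite size_poly0.
      by move=> x y hx hy; apply: leq_trans (size_polyD _ _) _; rewrite geq_max hx hy.
    move=> k kρ; apply: leq_trans (size_polyMleq _ _) _.
    have := sk k kρ; have : (size (a 0%R k) <= d.+1)%N by rewrite -hmax (leq_bigmax k).
    lia.
  have [->|h0] := eqVneq (h' ρ 0) 0; first by rewrite size_poly0.
  by rewrite size_mul // sρ addSn /= mul2n -addnn leq_add2l.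
have hd : forall r k, (d < k)%N -> (h' r 0)`_k = 0.
  move=> r k dk; apply: nth_default; apply: leq_trans (ltnW dk).
  by have [->|rρ] := eqVneq r ρ; [exact: sρ' | exact: sk].
have -> : h = h' + \sum_(i | i != ρ) (h i 0 %/ aρ) *: κ i by rewrite subrK.
apply: spanD; first exact: low.
by apply: span_sum => i _; apply: spanZ.
Qed.
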